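(* There is a $\mathsf{conv}$-MAD family, i.e. a MAD family $\mathcal{A}$ on $\omega$ such that $\mathcal{I}(\mathcal{A})\not\leq_K\mathsf{conv}$.
   Context: A MAD family is a maximal family of infinite subsets of $\omega$ with pairwise finite intersections; $\mathcal{I}(\mathcal{A})$ is the ideal on $\omega$ generated by $\mathcal{A}$ and the finite sets. $\mathsf{conv}$ is the ideal on $[0,1]\cap\mathbb{Q}$ generated by all sequences (of rationals in $[0,1]$) converging to a real number. For an ideal $\mathcal{I}$ on $X$ and $\mathcal{J}$ on $Y$ ($X,Y$ countable), $\mathcal{I}\le_K\mathcal{J}$ means there is $f:Y\to X$ with $f^{-1}(A)\in\mathcal{J}$ for all $A\in\mathcal{I}$. *)

(* Defs.v *)
From HB Require Import structures.
From mathcomp Require Import all_boot all_order all_algebra.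
From mathcomp Require Import all_classical all_reals all_analysis.
From mathcomp Require Import Rstruct Rstruct_topology.
Set Implicit Arguments. Unset Strict Implicit. Unset Printing Implicit Defensive.
Import Order.TTheory GRing.Theory Num.Theory.
Local Open Scope classical_set_scope.
Local Open Scope ring_scope.

Definition ad_family (A : set (set nat)) : Prop :=
  (forall a, A a -> infinite_set a) /\
  (forall a b, A a -> A b -> a <> b -> finite_set (a `&` b)).

Definition MAD (A : set (set nat)) : Prop :=
  ad_family A /\ infinite_set A /\
  (forall A' : set (set nat), A `<=` A' -> ad_family A' -> A' = A).

(* I(A): the ideal generated by A and the finite sets:
   X is covered, up to a finite set, by finitely many members of A. *)
Definition ideal_of (A : set (set nat)) (X : set nat) : Prop :=
  exists (n : nat) (As : nat -> set nat),
    (forall i, (i < n)%N -> A (As i)) /\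
    finite_set (X `\` \bigcup_(i in [set i | (i < n)%N]) As i).

Definition Q01 := {q : rat | (0 <= q <= 1)%R}.

Definition conv_seq (s : nat -> Q01) : Prop :=
  exists x : Rdefinitions.R, (fun n => (ratr (sval (s n)) : Rdefinitions.R)) @ \oo --> x.

(* conv: the ideal on Q01 generated by (ranges of) convergent sequences:
   X is contained in the union of the ranges of finitely many of them. *)
Definition conv (X : set Q01) : Prop :=
  exists (n : nat) (ss : nat -> nat -> Q01),
    (forall i, (i < n)%N -> conv_seq (ss i)) /\
    X `<=` \bigcup_(i in [set i | (i < n)%N]) range (ss i).

Definition katetov_le {X Y : Type} (I : set X -> Prop) (J : set Y -> Prop) : Prop :=
  exists f : Y -> X, forall A : set X, I A -> J (f @^-1` A).

(* Main.v *)
Require Import Defs.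
From mathcomp Require Import all_boot all_classical.

Require Import Defs.
From HB Require Import structures.
From mathcomp Require Import all_boot all_order all_algebra.
From mathcomp Require Import all_classical all_reals all_analysis.
From mathcomp Require Import Rstruct Rstruct_topology.
From mathcomp Require Import lra.
Require Import Defs.
Set Implicit Arguments. Unset Strict Implicit. Unset Printing Implicit Defensive.
Import Order.TTheory GRing.Theory Num.Theory.
Local Open Scope classical_set_scope.
Local Open Scope ring_scope.

From mathcomp Require Import wochoice.
Require Import Defs.


Notation RR := Rdefinitions.R.
Definition rq (q : Q01) : RR := ratr (sval q).

Definition LF (X : set Q01) (y : RR) :=
  exists2 e : RR, 0 < e & finite_set [set q | X q /\ `|rq q - y| < e].

Lemma LF_sub X Y y : X `<=` Y -> LF Y y -> LF X y.
Proof.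
move=> XY [e e0 fe]; exists e => //; apply: sub_finite_set fe => q [Xq ?]; split=> //; exact: XY.
Qed.

Lemma LF_U X Y y : LF X y -> LF Y y -> LF (X `|` Y) y.
Proof.
move=> [e1 e10 f1] [e2 e20 f2]; exists (Num.min e1 e2); first by rewrite lt_min e10 e20.
apply: (sub_finite_set (B := [set q | X q /\ `|rq q - y| < e1] `|` [set q | Y q /\ `|rq q - y| < e2])).
  move=> q [[Xq|Yq]]; rewrite lt_min => /andP[h1 h2]; [left|right]; by split.
by rewrite finite_setU; split.
Qed.

Lemma LF0 y : LF set0 y.
Proof. exists 1 => //; apply: (sub_finite_set (B := @set0 Q01)) => [q [[]]|]; exact: finite_set0. Qed.

Lemma near_oo_ex (P : nat -> Prop) : (\forall n \near \oo, P n) -> exists N, forall n, (N <= n)%N -> P n.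
Proof. by move=> [N _ HN]; exists N => n Nn; apply: HN. Qed.

Lemma LF_range (s : nat -> Q01) (l y : RR) :
  (fun n => rq (s n)) @ \oo --> l -> y != l -> LF (range s) y.
Proof.
move=> cv0 yl.
have cv1 : (fun n => rq (s n) : RR^o) @ \oo --> (l : RR^o) by exact: cv0.
move/cvgrPdist_lt : cv1 => cv.
have e0 : 0 < `|l - y| / 2 by rewrite divr_gt0 // normr_gt0 subr_eq0 eq_sym.
have [N HN] := near_oo_ex (cv _ e0).
exists (`|l - y| / 2) => //.
apply: sub_finite_set (finite_image s (finite_II N)) => q [[n _ <-] hq].
exists n => //=; rewrite /= ltnNge; apply/negP => /HN h.
have h3 := ler_distD (rq (s n)) l y.
have h4 : 0 < `|l - y| by rewrite normr_gt0 subr_eq0 eq_sym.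
move: h hq h3 h4.
move: `|l - rq (s n)| `|rq (s n) - y| `|l - y| => a b c; lra.
Qed.

Lemma LF_bigcup (ss : nat -> nat -> Q01) n y :
  (forall i, (i < n)%N -> LF (range (ss i)) y) ->
  LF (\bigcup_(i in [set i | (i < n)%N]) range (ss i)) y.
Proof.
elim: n => [|n IH] H.
  by apply: LF_sub (LF0 y) => q [i /= ].
apply: (LF_sub (Y := (\bigcup_(i in [set i | (i < n)%N]) range (ss i)) `|` range (ss n))).
  move=> q [i /= ]; rewrite ltnS leq_eqVlt => /orP[/eqP ->|lt]; first by right.
  by move=> h; left; exists i.
apply: LF_U; last exact: H.
by apply: IH => i lt; apply: H; apply: ltnW.
Qed.

Lemma conv_LF X : conv X -> finite_set [set y | ~ LF X y].
Proof.
move=> [n [ss [cs sub]]].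
apply: (sub_finite_set (B := \bigcup_(i in [set i | (i < n)%N]) [set y | ~ LF (range (ss i)) y])).
  move=> y nLF; apply: contrapT => nH; apply: nLF.
  apply: LF_sub sub _; apply: LF_bigcup => i lt.
  by apply: contrapT => h; apply: nH; exists i.
apply: bigcup_finite; first exact: (finite_II n).
move=> i /= /cs [l cv].
apply: (sub_finite_set (B := [set l])); last exact: finite_set1.
move=> y /= h; apply: contrapT => yl; apply: h; apply: (LF_range cv).
by apply/eqP.
Qed.



Definition hf : RR := 2^-1.
Lemma hf_gt0 : 0 < hf. Proof. by rewrite /hf invr_gt0 ltr0n. Qed.
Lemma hf_lt1 : hf < 1. Proof. by rewrite /hf invf_lt1 // ?ltr0n // ltr1n. Qed.
Lemma hfX_gt0 n : 0 < hf ^+ n. Proof. exact: exprn_gt0 hf_gt0. Qed.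
Lemma hfX_le m n : (m <= n)%N -> hf ^+ n <= hf ^+ m.
Proof. by move=> mn; apply: (ler_wiXn2l (ltW hf_gt0) (ltW hf_lt1)). Qed.
Lemma hfX2 : hf ^+ 2 = 4^-1.
Proof. by rewrite /hf expr2 -invfM; congr (_^-1); rewrite -natrM. Qed.

Lemma hfX_small (e : RR) : 0 < e -> exists J, forall j, (J <= j)%N -> hf ^+ j < e.
Proof.
move=> e0.
have h1 : `|hf| < 1 by rewrite ger0_norm ?hf_lt1 // ltW // hf_gt0.
have cv1 : (fun n => hf ^+ n : RR^o) @ \oo --> (0 : RR^o) by exact: cvg_expr h1.
move/cvgrPdist_lt : cv1 => cv.
have [J HJ] := near_oo_ex (cv _ e0).
exists J => j /HJ; rewrite sub0r normrN ger0_norm //; exact: ltW (hfX_gt0 j).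
Qed.

Lemma inj_finite_contra T (g : nat -> T) (M : set nat) (Z : set T) :
  injective g -> infinite_set M -> (forall m, M m -> Z (g m)) -> finite_set Z -> False.
Proof.
move=> ig iM MZ fZ; apply: iM.
apply: (sub_finite_set (B := g @^-1` Z)) => [m Mm|]; first exact: MZ.
by apply: finite_preimage => // a b _ _; apply: ig.
Qed.

Lemma noLF (X : set Q01) (y : RR) (g : nat -> Q01) (M : set nat) :
  injective g -> infinite_set M -> (forall m, M m -> X (g m)) ->
  (forall e, 0 < e -> exists J, forall m, (J <= m)%N -> `|rq (g m) - y| < e) ->
  ~ LF X y.
Proof.
move=> ig iM MX cv [e e0 fZ]; have [J HJ] := cv e e0.
apply: iM; apply: (sub_finite_set (B := `I_J `|` g @^-1` [set q | X q /\ `|rq q - y| < e])).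
  move=> m Mm; case: (ltnP m J) => h; [left|right] => //; split; [exact: MX|exact: HJ].
rewrite finite_setU; split => //; apply: finite_preimage => // a b _ _; exact: ig.
Qed.

Definition rr k j := hf ^+ (k + j + 2).

Section Step.
Variables (f : Q01 -> nat) (B : set (set nat)) (x : nat -> RR) (y : RR).
Hypotheses (hx : injective x) (hxr : forall k, 4^-1 <= x k <= 3/4)
  (hcv : x @ \oo --> y)
  (hBy : forall b, B b -> LF (f @^-1` b) y)
  (hBx : forall b k, B b -> LF (f @^-1` b) (x k))
  (hfib : forall n k, LF (f @^-1` [set n]) (x k)).

Lemma ex_q : exists q : nat -> nat -> Q01,
  forall k j, x k + rr k j / 2 < rq (q k j) < x k + rr k j.
Proof.
have H : forall kj : nat * nat, exists q : Q01,
    x kj.1 + rr kj.1 kj.2 / 2 < rq q < x kj.1 + rr kj.1 kj.2.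
  move=> [k j] /=.
  have r0 : 0 < rr k j by exact: hfX_gt0.
  have r14 : rr k j <= 4^-1 by rewrite -hfX2; apply: hfX_le; rewrite addnC leq_addr.
  have lt : x k + rr k j / 2 < x k + rr k j by lra.
  have [p] := rat_in_itvoo lt; rewrite in_itv /= => /andP[h1 h2].
  have := hxr k => /andP[x1 x2].
  have p01 : (0 <= p <= 1)%R.
    apply/andP; split.
      by rewrite -(ler0q RR); lra.
    by rewrite -(ler_rat RR) rmorph1; lra.
  by exists (exist _ p p01); rewrite /rq /= h1 h2.
have [g hg] := choice H.
by exists (fun k j => g (k, j)) => k j; apply: (hg (k, j)).
Qed.

Variable q : nat -> nat -> Q01.
Hypothesis hq : forall k j, x k + rr k j / 2 < rq (q k j) < x k + rr k j.

Lemma shell_lt k j1 j2 : (j1 < j2)%N -> rq (q k j2) < rq (q k j1).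
Proof.
move=> lt.
have h : rr k j2 <= rr k j1 / 2.
  have -> : rr k j1 / 2 = rr k j1.+1.
    rewrite /rr; have -> : (k + j1.+1 + 2 = (k + j1 + 2).+1)%N by rewrite !addnS !addSn.
    by rewrite exprS /hf mulrC.
  by apply: hfX_le; rewrite leq_add2r leq_add2l.
have := hq k j1; have := hq k j2; move=> /andP[a1 a2] /andP[b1 b2]; lra.
Qed.

Lemma q_inj k : injective (q k).
Proof.
move=> j1 j2 e; case: (ltngtP j1 j2) => // h.
  by have := shell_lt k h; rewrite e ltxx.
by have := shell_lt k h; rewrite e ltxx.
Qed.

Lemma q_close k e : 0 < e -> exists J, forall j, (J <= j)%N -> `|rq (q k j) - x k| < e.
Proof.
move=> e0; have [J HJ] := hfX_small e0; exists J => j Jj.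
have := hq k j => /andP[a1 a2].
have r0 : 0 < rr k j by exact: hfX_gt0.
have : rr k j <= hf ^+ j by apply: hfX_le; rewrite (addnC k) -addnA leq_addr.
have := HJ j Jj.
rewrite ger0_norm; last by lra.
lra.
Qed.

Definition aset := [set n | exists k j, n = f (q k j)].

Lemma a_noLF k : ~ LF (f @^-1` aset) (x k).
Proof.
apply: (noLF (g := q k) (M := setT)) => //.
- exact: q_inj.
- exact: infinite_nat.
- by move=> m _; exists k, m.
- by move=> e e0; apply: q_close.
Qed.

Lemma a_notconv : ~ conv (f @^-1` aset).
Proof.
move=> /conv_LF fL.
have [k Hk] : exists k, LF (f @^-1` aset) (x k).
  apply: contrapT => H.
  apply: (inj_finite_contra (g := x) (M := setT) hx infinite_nat _ fL).
  by move=> m _ /= h; apply: H; exists m.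
exact: (a_noLF Hk).
Qed.

Lemma a_inf : infinite_set aset.
Proof.
move=> fa.
have [n [an inM]] : exists n, aset n /\ infinite_set [set m | f (q 0 m) = n].
  apply: contrapT => H; apply: infinite_nat.
  apply: (sub_finite_set (B := \bigcup_(n in aset) [set m | f (q 0 m) = n])).
    by move=> m _; exists (f (q 0 m)) => //; exists 0%N, m.
  apply: bigcup_finite => // n an; by apply: contrapT => h; apply: H; exists n; split.
have nl := @noLF (f @^-1` [set n]) (x 0%N) (q 0%N) [set m | f (q 0%N m) = n] (@q_inj 0%N) inM.
apply: nl (hfib n 0%N).
- by move=> m /= ->.
- by move=> e e0; apply: q_close.
Qed.

Lemma a_AD b : B b -> finite_set (aset `&` b).
Proof.
move=> Bb; have [e e0 fZ] := hBy Bb.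
set Z := [set q0 | (f @^-1` b) q0 /\ `|rq q0 - y| < e] in fZ.
have e20 : 0 < e / 2 by rewrite divr_gt0.
have cv1 : (x : nat -> RR^o) @ \oo --> (y : RR^o) by exact: hcv.
move/cvgrPdist_lt : cv1 => cv.
have [K1 HK1] := near_oo_ex (cv _ e20).
have [K2 HK2] := hfX_small e20.
pose k0 := maxn K1 K2.
apply: (sub_finite_set (B := f @` Z `|` \bigcup_(k in `I_k0) [set n | exists j, n = f (q k j) /\ b n])).
  move=> n [[k [j ->]] bn].
  case: (ltnP k k0) => hk; first by right; exists k => //; exists j.
  left; exists (q k j) => //; split => //.
  have h1 := HK1 k (leq_trans (leq_maxl _ _) hk).
  have h2 := HK2 k (leq_trans (leq_maxr _ _) hk).
  have h3 : rr k j <= hf ^+ k by apply: hfX_le; rewrite -addnA leq_addr.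
  have := hq k j => /andP[a1 a2].
  have h4 := ler_distD (x k) (rq (q k j)) y.
  have r0 : 0 < rr k j by exact: hfX_gt0.
  move: h1 h4; rewrite (distrC y) (ger0_norm (x := rq (q k j) - x k)); last by lra.
  move: `|x k - y| `|rq (q k j) - y| => u v; lra.
rewrite finite_setU; split; first exact: finite_image.
apply: bigcup_finite => // k _.
have [ek ek0 fZk] := hBx k Bb.
have [J HJ] := q_close k ek0.
apply: (sub_finite_set (B := f @` [set q0 | (f @^-1` b) q0 /\ `|rq q0 - x k| < ek] `|`
   (fun j => f (q k j)) @` `I_J)).
  move=> n [j [-> bn]]; case: (ltnP j J) => hj; first by right; exists j.
  by left; exists (q k j) => //; split => //; apply: HJ.
rewrite finite_setU; split; exact: finite_image.
Qed.

End Step.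

Lemma step (f : Q01 -> nat) (B : set (set nat)) (x : nat -> RR) (y : RR) :
  injective x -> (forall k, 4^-1 <= x k <= 3/4) -> x @ \oo --> y ->
  (forall b, B b -> LF (f @^-1` b) y) ->
  (forall b k, B b -> LF (f @^-1` b) (x k)) ->
  (forall n k, LF (f @^-1` [set n]) (x k)) ->
  exists a : set nat, infinite_set a /\ ~ conv (f @^-1` a) /\
    forall b, B b -> finite_set (a `&` b).
Proof.
move=> hx hxr hcv hBy hBx hfib.
have [q hq] := ex_q hxr.
exists (aset f q); split; first exact: (a_inf hfib hq).
split; first exact: (a_notconv hx hq).
by move=> b Bb; apply: (a_AD hcv hBy hBx hq Bb).
Qed.



Lemma near_oo_intro (P : nat -> Prop) : (exists N, forall n, (N <= n)%N -> P n) -> \forall n \near \oo, P n.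
Proof. by move=> [N HN]; exists N => // n /= /HN. Qed.

Lemma geo_small (c e : RR) : 0 < c -> c < 1 -> 0 < e -> exists J, forall j, (J <= j)%N -> c ^+ j < e.
Proof.
move=> c0 c1 e0.
have h1 : `|c| < 1 by rewrite ger0_norm // ltW.
have cv1 : (fun n => c ^+ n : RR^o) @ \oo --> (0 : RR^o) by exact: cvg_expr h1.
move/cvgrPdist_lt : cv1 => cv.
have [J HJ] := near_oo_ex (cv _ e0).
exists J => j /HJ; rewrite sub0r normrN ger0_norm //; exact: ltW (exprn_gt0 _ c0).
Qed.

Lemma countableU T (A B : set T) : countable A -> countable B -> countable (A `|` B).
Proof.
move=> cA cB.
have -> : A `|` B = \bigcup_(b in [set: bool]) (if b then A else B).
  apply/seteqP; split=> [z [Az|Bz]|z [[] _ h]]; [by exists true|by exists false|by left|by right].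
by apply: bigcup_countable => // -[].
Qed.

Definition t3 : RR := 3^-1.
Lemma t3_gt0 : 0 < t3. Proof. by rewrite /t3 invr_gt0 ltr0n. Qed.
Lemma t3_lt1 : t3 < 1. Proof. by rewrite /t3 invf_lt1 // ?ltr0n // ltr1n. Qed.
Lemma t3X_gt0 n : 0 < t3 ^+ n. Proof. exact: exprn_gt0 t3_gt0. Qed.
Lemma t3XS n : t3 ^+ n.+1 = t3 ^+ n / 3. Proof. by rewrite exprSr. Qed.
Lemma t3X_le m n : (m <= n)%N -> t3 ^+ n <= t3 ^+ m.
Proof. by move=> mn; apply: (ler_wiXn2l (ltW t3_gt0) (ltW t3_lt1)). Qed.

Definition dg (u : nat -> bool) k : RR := if u k then 2 * t3 ^+ k.+1 else 0.
Definition Sp (u : nat -> bool) n : RR := \sum_(k < n) dg u k.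

Lemma dg_bounds u k : 0 <= dg u k <= t3 ^+ k - t3 ^+ k.+1.
Proof.
rewrite /dg t3XS; have := t3X_gt0 k; case: (u k) => /= h; lra.
Qed.

Lemma SpS u n : Sp u n.+1 = Sp u n + dg u n.
Proof. by rewrite /Sp big_ord_recr. Qed.

Lemma Sp_bounds u n d : Sp u n <= Sp u (n + d) <= Sp u n + (t3 ^+ n - t3 ^+ (n + d)).
Proof.
elim: d => [|d IH]; first by rewrite addn0; lra.
rewrite addnS SpS; have := dg_bounds u (n + d); lra.
Qed.

Lemma Sp_mono u : {homo Sp u : n m / (n <= m)%N >-> n <= m}.
Proof. by move=> n m /subnKC <-; have /andP[] := Sp_bounds u n (m - n). Qed.

Lemma Sp_ub u n : Sp u n <= 1.
Proof.
have := Sp_bounds u 0 n; rewrite add0n /Sp big_ord0 expr0 => /andP[_ h].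
have := t3X_gt0 n; lra.
Qed.

Lemma Sp_cvg u : cvgn (Sp u).
Proof.
apply: nondecreasing_is_cvgn; first exact: Sp_mono.
by exists 1 => _ [n _ <-]; apply: Sp_ub.
Qed.

Definition sig_ u : RR := limn (Sp u).

Lemma sig_bounds u n : Sp u n <= sig_ u <= Sp u n + t3 ^+ n.
Proof.
rewrite /sig_; apply/andP; split; first by apply: nondecreasing_cvgn_le; [exact: Sp_mono|exact: Sp_cvg].
apply: limr_le; first exact: Sp_cvg.
apply: near_oo_intro; exists n => m nm.
have := Sp_bounds u n (m - n); rewrite subnKC // => /andP[_ h].
have := t3X_gt0 m; lra.
Qed.

Definition psi u : RR := 4^-1 + sig_ u / 2.

Lemma psi_range u : 4^-1 <= psi u <= 3/4.
Proof.
have := sig_bounds u 0; rewrite /Sp big_ord0 expr0 /psi => /andP[h1 h2]; lra.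
Qed.

Lemma Sp_agree u v n : (forall i, (i < n)%N -> u i = v i) -> Sp u n = Sp v n.
Proof. by move=> h; apply: eq_bigr => i _; rewrite /dg h. Qed.

Lemma psi_close u v n : (forall i, (i < n)%N -> u i = v i) -> `|psi u - psi v| <= t3 ^+ n.
Proof.
move=> h; have := sig_bounds u n; have := sig_bounds v n; rewrite (Sp_agree h) /psi.
move=> /andP[a1 a2] /andP[b1 b2].
have := t3X_gt0 n.
rewrite ler_norml => ?; apply/andP; split; lra.
Qed.

Lemma psi_lt u v n : (forall i, (i < n)%N -> u i = v i) -> u n = false -> v n = true ->
  psi u < psi v.
Proof.
move=> h un vn.
have := sig_bounds u n.+1; have := sig_bounds v n.+1.
rewrite !SpS (Sp_agree h) /dg un vn /psi t3XS.
move=> /andP[a1 a2] /andP[b1 b2]; have := t3X_gt0 n; simpl; lra.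
Qed.

Lemma psi_inj : injective psi.
Proof.
move=> u v e; apply: contrapT => uv.
have ex : exists n, u n != v n.
  apply: contrapT => h; apply: uv; apply: funext => n; apply/eqP; apply: contrapT => h2.
  by apply: h; exists n; apply/negP.
have [n nn nmin] := ex_minnP ex.
have agree : forall i, (i < n)%N -> u i = v i.
  move=> i lt; apply/eqP; apply: contraTT lt => h.
  by rewrite -leqNgt; apply: nmin.
move: nn; case uE: (u n); case vE: (v n) => // _.
  by have := psi_lt (fun i lt => esym (agree i lt)) vE uE; rewrite e ltxx.
by have := psi_lt agree uE vE; rewrite e ltxx.
Qed.

Definition Ecode (u : nat -> bool) (k : nat) (i : nat) : bool :=
  if odd i then (i./2 == k) else u i./2.
Definition Einf (u : nat -> bool) (i : nat) : bool :=
  if odd i then false else u i./2.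

Lemma Ecode_even u k n : Ecode u k n.*2 = u n.
Proof. by rewrite /Ecode odd_double doubleK. Qed.
Lemma Einf_even u n : Einf u n.*2 = u n.
Proof. by rewrite /Einf odd_double doubleK. Qed.

Lemma Ecode_agree u k i : (i < k.*2.+1)%N -> Ecode u k i = Einf u i.
Proof.
rewrite /Ecode /Einf; case oi: (odd i) => // lt.
apply/negbTE/eqP => hk; move: lt.
have := odd_double_half i; rewrite oi hk /= add1n => <-; by rewrite ltnn.
Qed.

Lemma Ecode_inj u : injective (Ecode u).
Proof.
move=> k k' e; have := congr1 (fun w => w k.*2.+1) e.
have h1 : odd k.*2.+1 by rewrite /= odd_double.
have h2 : (k.*2.+1)./2 = k by rewrite -[k.*2.+1]/(true + k.*2)%N half_bit_double.
by rewrite /Ecode h1 h2 eqxx => /esym/eqP.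
Qed.

Definition xs u k := psi (Ecode u k).
Definition ys u := psi (Einf u).

Lemma xs_inj u : injective (xs u).
Proof. by move=> k k' /psi_inj/Ecode_inj. Qed.

Lemma xs_cvg u : xs u @ \oo --> ys u.
Proof.
have cv : (xs u : nat -> RR^o) @ \oo --> (ys u : RR^o).
  apply/cvgrPdist_lt => e e0; apply: near_oo_intro.
  have [J HJ] := geo_small t3_gt0 t3_lt1 e0.
  exists J => k Jk.
  have h := @psi_close (Einf u) (Ecode u k) k.*2.+1 (fun i lt => esym (Ecode_agree u lt)).
  rewrite /ys /xs; apply: le_lt_trans h _; apply: le_lt_trans (HJ k Jk).
  by apply: t3X_le; apply: leqW; rewrite -addnn leq_addr.
exact: cv.
Qed.

Definition good (Z : set RR) (x : nat -> RR) (y : RR) :=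
  [/\ injective x, (forall k, 4^-1 <= x k <= 3/4), x @ \oo --> y, (forall k, ~ Z (x k)) & ~ Z y].

Definition small {X : Type} (S : set X) := forall (K : X -> set RR),
  (forall s, S s -> countable (K s)) -> forall C : set RR, countable C ->
  exists x y, good (\bigcup_(s in S) K s `|` C) x y.

Lemma cantor_bool : ~ exists j : (nat -> bool) -> nat, injective j.
Proof.
move=> [j ij].
pose e n := match pselect (exists u, j u = n) with left p => proj1_sig (cid p) | right _ => (fun _ => false) end.
have eK u : e (j u) = u.
  rewrite /e; case: pselect => [p|]; last by move=> h; exfalso; apply: h; exists u.
  by case: (cid p) => w /= /ij.
pose d n := ~~ e n n.
have := eK d; move=> /(congr1 (fun w => w (j d))); rewrite {2}/d.
move=> h; have : e (j d) (j d) = ~~ e (j d) (j d) by exact: h.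
by case: (e (j d) (j d)).
Qed.

Lemma nonsmall_inj {X : Type} (S : set X) : ~ small S ->
  exists (K : X -> set RR) (C : set RR), (forall s, S s -> countable (K s)) /\ countable C /\
   exists z : (nat -> bool) -> RR, injective z /\ forall u, (\bigcup_(s in S) K s `|` C) (z u).
Proof.
move=> ns.
have [K [hK [C [hC H]]]] : exists K, (forall s, S s -> countable (K s)) /\ exists C, countable C /\
    forall x y, ~ good (\bigcup_(s in S) K s `|` C) x y.
  apply: contrapT => h; apply: ns => K hK C hC; apply: contrapT => h2; apply: h.
  exists K; split => //; exists C; split => // x y g; apply: h2; by exists x, y.
set Z := \bigcup_(s in S) K s `|` C in H *.
have hz : forall u, exists z, Z z /\ (z = ys u \/ exists k, z = xs u k).
  move=> u; apply: contrapT => h; apply: (H (xs u) (ys u)); split.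
  - exact: xs_inj.
  - by move=> k; apply: psi_range.
  - exact: xs_cvg.
  - by move=> k zk; apply: h; exists (xs u k); split => //; right; exists k.
  - by move=> zk; apply: h; exists (ys u); split => //; left.
have [z hz2] := choice hz.
exists K, C; split => //; split => //; exists z; split; last by move=> u; case: (hz2 u).
move=> u v e.
have [_ hu] := hz2 u; have [_ hv] := hz2 v.
have [a [ea ua]] : exists a, z u = psi a /\ forall n, a n.*2 = u n.
  case: hu => [->|[k ->]]; [exists (Einf u) | exists (Ecode u k)]; split => // n;
  by rewrite ?Einf_even ?Ecode_even.
have [b [eb vb]] : exists b, z v = psi b /\ forall n, b n.*2 = v n.
  case: hv => [->|[k ->]]; [exists (Einf v) | exists (Ecode v k)]; split => // n;
  by rewrite ?Einf_even ?Ecode_even.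
have ab : a = b by apply: psi_inj; rewrite -ea -eb.
by apply: funext => n; rewrite -ua -vb ab.
Qed.

Definition FF := (Q01 -> nat).

Definition enc (g : FF) (n : nat) : bool :=
  match (unpickle n : option (Q01 * nat)) with Some (q, k) => g q == k | None => false end.

Lemma enc_inj : injective enc.
Proof.
move=> g1 g2 e; apply: funext => q.
have := congr1 (fun w => w (pickle (q, g1 q))) e.
by rewrite /enc pickleK eqxx => /esym/eqP.
Qed.

Lemma countable_enum T (t0 : T) (A : set T) : countable A -> exists e : nat -> T, A `<=` range e.
Proof.
move=> /countable_injP [i hi].
pose e n := match pselect (exists a, A a /\ i a = n) with left p => proj1_sig (cid p) | right _ => t0 end.
exists e => a Aa; exists (i a) => //.
rewrite /e; case: pselect => [p|]; last by move=> h; exfalso; apply: h; exists a.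
case: (cid p) => w /= [Aw iw]; apply: hi => //; by rewrite inE.
Qed.

Lemma nonsmall_surj {X : Type} (S : set X) : ~ small S ->
  exists h : X * nat -> FF, forall g : FF, exists s n, S s /\ h (s, n) = g.
Proof.
move=> /nonsmall_inj [K [C [hK [hC [z [iz hz]]]]]].
pose io := fun g => z (enc g).
have iio : injective io by move=> g1 g2 /iz /enc_inj.
have [[s0 Ss0]|nS] := pselect (exists s, S s); last first.
  exfalso; have [i hi] := countable_injP _ hC.
  apply: cantor_bool; exists (fun u => i (z u)) => u v e.
  have cz : forall w, C (z w).
    by move=> w; case: (hz w) => // -[s Ss _]; exfalso; apply: nS; exists s.
  by apply: iz; apply: hi => //; rewrite inE; apply: cz.
have hE : forall s, exists e : nat -> FF, S s -> io @^-1` (K s `|` C) `<=` range e.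
  move=> s; case: (pselect (S s)) => Ss; last by exists (fun _ _ => 0%N).
  have cM : countable (io @^-1` (K s `|` C)).
    have /countable_injP [i hi] := countableU (hK s Ss) hC.
    apply/countable_injP; exists (fun g => i (io g)) => g1 g2 h1 h2 e.
    by apply: iio; apply: hi => //; rewrite inE; rewrite inE in h1 h2.
  have [e he] := countable_enum (fun _ => 0%N) cM.
  by exists e.
have [E hEs] := choice hE.
exists (fun p => E p.1 p.2) => g.
have : (\bigcup_(s in S) K s `|` C) (io g) by exact: hz.
case => [[s Ss Ksg]|Cg].
  have [n _ <-] := hEs s Ss g (or_introl Ksg); by exists s, n.
have [n _ <-] := hEs s0 Ss0 g (or_intror Cg); by exists s0, n.
Qed.


Section WO.
Variable R : rel FF.
Hypothesis wo : well_order R.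

Lemma wo_min (P : FF -> Prop) : (exists x, P x) -> exists z, P z /\ forall y, P y -> R z y.
Proof.
move=> [x Px].
have ne : wochoice.nonempty [pred w | `[< P w >]] by exists x; apply/asboolP.
have [z [[zA lb] _]] := wo ne.
exists z; split; first by move: zA => /asboolP.
by move=> w Pw; apply: lb; apply/asboolP.
Qed.

Lemma wo_refl x : R x x.
Proof.
have ex : exists w, w = x by exists x.
have [z [zx h]] := wo_min ex.
by subst z; apply: h.
Qed.

Lemma wo_total x y : R x y \/ R y x.
Proof.
have ex : exists w, w = x \/ w = y by exists x; left.
have [z [[zx|zy] h]] := wo_min ex; subst z.
  by left; apply: h; right.
by right; apply: h; left.
Qed.

Lemma wo_anti x y : R x y -> R y x -> x = y.
Proof.
move=> xy yx.
have ne : wochoice.nonempty [pred w | (w == x) || (w == y)] by exists x; rewrite inE eqxx.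
have [z [_ uniq]] := wo ne.
have mx : minimum_of R [pred w | (w == x) || (w == y)] x.
  split; first by rewrite inE eqxx.
  by move=> w; rewrite inE => /orP[/eqP ->|/eqP ->] //; apply: wo_refl.
have my : minimum_of R [pred w | (w == x) || (w == y)] y.
  split; first by rewrite inE eqxx orbT.
  by move=> w; rewrite inE => /orP[/eqP ->|/eqP ->] //; apply: wo_refl.
by rewrite -(uniq _ mx) (uniq _ my).
Qed.

Definition ltT (s t : FF * nat) := (R s.1 t.1 /\ s.1 <> t.1) \/ (s.1 = t.1 /\ (s.2 < t.2)%N).

Lemma ltT_tri s t : s = t \/ ltT s t \/ ltT t s.
Proof.
case: s t => [i n] [j m]; rewrite /ltT /=.
case: (pselect (i = j)) => [<-|ij].
  case: (ltngtP n m) => [lt|lt|->]; [by right; left; right|by right; right; right|by left].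
case: (wo_total i j) => h; [right; left; by left|right; right; left; split => //; by move=> e; apply: ij].
Qed.

Lemma ltT_min (P : FF * nat -> Prop) : (exists t, P t) -> exists t, P t /\ forall s, ltT s t -> ~ P s.
Proof.
move=> [[i n] Pt].
have [i0 [[n1 Pn1] mi]] := wo_min (P := fun i => exists n, P (i, n)) (ex_intro _ i (ex_intro _ n Pt)).
have ex : exists n, `[< P (i0, n) >] by exists n1; apply/asboolP.
have [n0 Pn0 mn0] := ex_minnP ex.
exists (i0, n0); split; first exact/asboolP.
move=> [j m] [[/= Rj ne]|[/= e lt]] Pjm.
  by apply: ne; apply: wo_anti => //; apply: mi; exists m.
subst j; have := mn0 m (asboolT Pjm); by rewrite leqNgt lt.
Qed.

End WO.

Definition col (m : nat) : set nat := [set n | exists k : nat, n = pickle (m, k)].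
Definition P0 : set (set nat) := range col.

Lemma pick_inj : injective (@pickle (nat * nat)%type).
Proof. exact: pcan_inj pickleK. Qed.

Lemma col_inf m : infinite_set (col m).
Proof.
move=> fc; apply: (inj_finite_contra (g := fun k => pickle (m, k)) (M := setT) _ infinite_nat _ fc).
  by move=> k k' /pick_inj [].
by move=> k _; exists k.
Qed.

Lemma col_disj m m' : m <> m' -> col m `&` col m' = set0.
Proof.
move=> mm; apply/seteqP; split => // n [[k ->] [k' /pick_inj [e _]]]; exact: mm.
Qed.

Lemma P0_ad : ad_family P0.
Proof.
split; first by move=> _ [m _ <-]; apply: col_inf.
move=> _ _ [m _ <-] [m' _ <-] ne.
have mm : m <> m' by move=> e; apply: ne; rewrite e.
by rewrite col_disj.
Qed.

Lemma P0_inf : infinite_set P0.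
Proof.
move=> fP; apply: (inj_finite_contra (g := col) (M := setT) _ infinite_nat _ fP).
  move=> m m' e; have : col m (pickle (m, 0%N)) by exists 0%N.
  by rewrite e => -[k /pick_inj []].
by move=> m _; exists m.
Qed.

Definition handled (f : FF) (A : set (set nat)) :=
  (exists n, ~ conv (f @^-1` [set n])) \/ (exists b, A b /\ ~ conv (f @^-1` b)).

Lemma handled_mono f A A' : A `<=` A' -> handled f A -> handled f A'.
Proof. by move=> AA' [h|[b [Ab h]]]; [left|right; exists b; split => //; apply: AA']. Qed.

Section Constr.
Variables (R : rel FF) (wo : well_order R) (Ip : set FF) (h : FF * nat -> FF).
Hypotheses (SM : forall i, Ip i -> small [set g | R g i /\ g <> i])
           (SJ : forall g, exists t, Ip t.1 /\ h t = g).

Definition TD (t : FF * nat) := Ip t.1.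
Definition dom (G : set (FF * nat * set nat)) t := exists a, G (t, a).
Definition Fam (G : set (FF * nat * set nat)) : set (set nat) :=
  P0 `|` [set a | (exists t, G (t, a)) /\ a <> set0].
Definition Valid G := [/\ (forall t a a', G (t,a) -> G (t,a') -> a = a'),
   (forall t, dom G t -> TD t),
   (forall s t, TD s -> dom G t -> ltT R s t -> dom G s),
   ad_family (Fam G) &
   (forall t a, G (t, a) -> handled (h t) (Fam G))].

Lemma Fam_mono G G' : G `<=` G' -> Fam G `<=` Fam G'.
Proof. by move=> GG b [P0b|[[t Gt] ne]]; [left|right; split => //; exists t; apply: GG]. Qed.

Lemma Valid_chain (F : set (set (FF * nat * set nat))) :
  F `<=` Valid -> total_on F subset -> Valid (\bigcup_(G in F) G).
Proof.
move=> FV tot.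
have FamU : forall b, Fam (\bigcup_(G in F) G) b -> P0 b \/ exists G, F G /\ Fam G b.
  move=> b [P0b|[[t [G FG Gt]] ne]]; first by left.
  by right; exists G; split => //; right; split => //; exists t.
have FamS : forall G, F G -> Fam G `<=` Fam (\bigcup_(G in F) G).
  by move=> G FG; apply: Fam_mono => z Gz; exists G.
split.
- move=> t a a' [G1 F1 G1t] [G2 F2 G2t].
  case: (tot _ _ F1 F2) => sub.
    by have [V1 _ _ _ _] := FV _ F2; apply: V1 (sub _ G1t) G2t.
  by have [V1 _ _ _ _] := FV _ F1; apply: V1 G1t (sub _ G2t).
- move=> t [a [G FG Gt]]; have [_ V2 _ _ _] := FV _ FG; apply: V2; by exists a.
- move=> s t Ts [a [G FG Gt]] lt.
  have [_ _ V2' _ _] := FV _ FG; have [a' Ga'] := V2' s t Ts (ex_intro _ a Gt) lt.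
  by exists a'; exists G.
- have common : forall a b, Fam (\bigcup_(G in F) G) a -> Fam (\bigcup_(G in F) G) b ->
      exists A', ad_family A' /\ A' a /\ A' b.
    move=> a b /FamU [Pa|[G1 [F1 Fa]]] /FamU [Pb|[G2 [F2 Fb]]].
    + by exists P0; split => //; apply: P0_ad.
    + by have [_ _ _ V3 _] := FV _ F2; exists (Fam G2); split => //; split => //; left.
    + by have [_ _ _ V3 _] := FV _ F1; exists (Fam G1); split => //; split => //; left.
    + case: (tot _ _ F1 F2) => sub.
        by have [_ _ _ V3 _] := FV _ F2; exists (Fam G2); split => //; split => //; apply: (Fam_mono sub).
      by have [_ _ _ V3 _] := FV _ F1; exists (Fam G1); split => //; split => //; apply: (Fam_mono sub).
  split.
    by move=> a Fa; have [A' [[ad1 _] [Aa _]]] := common a a Fa Fa; apply: ad1.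
  by move=> a b Fa Fb ne; have [A' [[_ ad2] [Aa Ab]]] := common a b Fa Fb; apply: ad2.
- move=> t a [G FG Gt]; have [_ _ _ _ V4] := FV _ FG.
  exact: handled_mono (FamS _ FG) (V4 _ _ Gt).
Qed.

End Constr.


Section Extend.
Variables (R : rel FF) (wo : well_order R) (Ip : set FF) (h : FF * nat -> FF).
Hypotheses (SM : forall i, Ip i -> small [set g | R g i /\ g <> i])
           (SJ : forall g, exists t, Ip t.1 /\ h t = g).

Local Notation Valid := (Valid R Ip h).
Local Notation TD := (TD Ip).

Lemma Valid_add G0 t a : Valid G0 -> TD t -> ~ dom G0 t ->
  (forall s, TD s -> ltT R s t -> dom G0 s) ->
  ((a = set0 /\ handled (h t) (Fam G0)) \/
   (infinite_set a /\ (forall b, Fam G0 b -> finite_set (a `&` b)) /\ ~ conv (h t @^-1` a))) ->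
  Valid (G0 `|` [set (t, a)]).
Proof.
move=> [V1 V2 V2' [ad1 ad2] V4] Tt ndt mint ha.
have FamG' : forall b, Fam (G0 `|` [set (t, a)]) b -> Fam G0 b \/ (b = a /\ a <> set0).
  move=> b [P0b|[[t1 [G0b|[_ ->]]] ne]]; [by left; left|by left; right; split => //; exists t1|by right].
have FamS : Fam G0 `<=` Fam (G0 `|` [set (t, a)]) by apply: Fam_mono => z Gz; left.
split.
- move=> t1 a1 a2 [G1|[e1 e1']] [G2|[e2 e2']] //=.
  + exact: V1 G1 G2.
  + by exfalso; apply: ndt; rewrite -e2; exists a1.
  + by exfalso; apply: ndt; rewrite -e1; exists a2.
  + by rewrite e1' e2'.
- by move=> t1 [a1 [G1|[-> _]]] //; apply: V2; exists a1.
- move=> s t1 Ts [a1 [G1|[e1 _]]] lt.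
    by have [a' Ga'] := V2' s t1 Ts (ex_intro _ a1 G1) lt; exists a'; left.
  by rewrite e1 in lt; have [a' Ga'] := mint s Ts lt; exists a'; left.
- split.
    move=> b /FamG' [Fb|[-> ne]]; first exact: ad1.
    by case: ha => [[e _]|[ia _]].
  move=> b1 b2 /FamG' [F1|[e1 ne1]] /FamG' [F2|[e2 ne2]] ne.
  + exact: ad2.
  + case: ha => [[ea _]|[_ [fa _]]]; first by exfalso; apply: ne2.
    by rewrite e2 setIC; apply: fa.
  + case: ha => [[ea _]|[_ [fa _]]]; first by exfalso; apply: ne1.
    by rewrite e1; apply: fa.
  + by exfalso; apply: ne; rewrite e1 e2.
- move=> t1 a1 [G1|[e1 _]]; first exact: handled_mono FamS (V4 _ _ G1).
  rewrite e1; case: ha => [[_ hd]|[ia [_ nc]]]; first exact: handled_mono FamS hd.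
  right; exists a; split => //; right; split; first by exists t; right.
  by move=> a0; apply: ia; rewrite a0.
Qed.

Lemma countable_nat_bigcup T (F : nat -> set T) : (forall n, countable (F n)) -> countable (\bigcup_(n in [set: nat]) F n).
Proof. by move=> h1; apply: bigcup_countable. Qed.

Lemma extend G0 t : Valid G0 -> TD t -> ~ dom G0 t ->
  (forall s, TD s -> ltT R s t -> dom G0 s) ->
  (forall s, dom G0 s -> ltT R s t) ->
  exists a, Valid (G0 `|` [set (t, a)]).
Proof.
move=> VG Tt ndt mint below.
set f := h t.
case: (pselect (handled f (Fam G0))) => hd.
  by exists set0; apply: Valid_add => //; left.
have fibc : forall n, conv (f @^-1` [set n]).
  by move=> n; apply: contrapT => nc; apply: hd; left; exists n.
have famc : forall b, Fam G0 b -> conv (f @^-1` b).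
  by move=> b Fb; apply: contrapT => nc; apply: hd; right; exists b.
have [V1 V2 V2' V3 V4] := VG.
pose K (g : FF) : set RR := [set r | exists m a, G0 ((g, m), a) /\ a <> set0 /\ ~ LF (f @^-1` a) r].
have Kc : forall g, countable (K g).
  move=> g.
  apply: (sub_countable (B := \bigcup_(m in [set: nat]) [set r | exists a, G0 ((g, m), a) /\ a <> set0 /\ ~ LF (f @^-1` a) r])).
    by apply: subset_card_le => r [m [a ha]]; exists m => //; exists a.
  apply: bigcup_countable => // m _.
  case: (pselect (exists a, G0 ((g, m), a) /\ a <> set0)) => [[a0 [Ga0 ne0]]|nex].
    apply: finite_set_countable.
    apply: (sub_finite_set (B := [set r | ~ LF (f @^-1` a0) r])).
      by move=> r [a [Ga [_ nl]]]; rewrite (V1 _ _ _ Ga Ga0) in nl.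
    by apply: conv_LF; apply: famc; right; split => //; exists (g, m).
  apply: finite_set_countable; apply: (sub_finite_set (B := @set0 RR)) => // r [a [Ga [ne _]]].
  by apply: nex; exists a.
pose C : set RR := (\bigcup_(n in [set: nat]) [set r | ~ LF (f @^-1` [set n]) r]) `|`
   (\bigcup_(m in [set: nat]) [set r | ~ LF (f @^-1` col m) r]) `|` K t.1.
have Cc : countable C.
  apply: countableU; last exact: Kc.
  apply: countableU; apply: bigcup_countable => // n _; apply: finite_set_countable; apply: conv_LF.
    exact: fibc.
  by apply: famc; left; exists n.
have [x [y [ix xr cv nx ny]]] := SM Tt (fun g _ => Kc g) Cc.
set Z := \bigcup_(s in [set g | R g t.1 /\ g <> t.1]) K s `|` C in nx ny.
have inZ : forall b r, Fam G0 b -> ~ LF (f @^-1` b) r -> Z r.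
  move=> b r [[m _ <-]|[[s Gs] ne]] nl; first by right; left; right; exists m.
  have Ks : K s.1 r by exists s.2, b; case: s Gs => s1 s2 Gs; split.
  have [[Rs ns]|[es _]] := below s (ex_intro _ b Gs).
    by left; exists s.1.
  by right; right; rewrite -es.
have [a [ia [nca fa]]] := step (f := f) (B := Fam G0) ix xr cv
   (fun b Fb => contrapT (fun nl => ny (inZ b y Fb nl)))
   (fun b k Fb => contrapT (fun nl => nx k (inZ b (x k) Fb nl)))
   (fun n k => contrapT (fun nl => nx k (or_intror (or_introl (or_introl (ex_intro2 _ _ n I nl)))))).
exists a; apply: Valid_add => //; right; split => //.
Qed.

Lemma maximal_full G0 : Valid G0 -> (forall G, G0 `<` G -> ~ Valid G) ->
  forall t, TD t -> dom G0 t.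
Proof.
move=> VG mx t0 Tt0; apply: contrapT => nd0.
have [t [[Tt ndt] mint]] := ltT_min wo (ex_intro (fun t => TD t /\ ~ dom G0 t) t0 (conj Tt0 nd0)).
have mint' : forall s, TD s -> ltT R s t -> dom G0 s.
  by move=> s Ts lt; apply: contrapT => nd; apply: (mint s lt).
have below : forall s, dom G0 s -> ltT R s t.
  move=> s ds; have [_ V2 V2' _ _] := VG.
  case: (ltT_tri wo s t) => [e|[//|lt]]; first by exfalso; apply: ndt; rewrite -e.
  by exfalso; apply: ndt; apply: (V2' t s Tt ds lt).
have [a Va] := extend VG Tt ndt mint' below.
apply: (mx _ _ Va); split; first by move=> z Gz; left.
by move=> sub; apply: ndt; exists a; apply: sub; right.
Qed.

End Extend.


Lemma index_exists (R : rel FF) (wo : well_order R) :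
  exists (Ip : set FF) (h : FF * nat -> FF),
    (forall i, Ip i -> small [set g | R g i /\ g <> i]) /\ (forall g, exists t, Ip t.1 /\ h t = g).
Proof.
case: (pselect (forall i, small [set g | R g i /\ g <> i])) => allS.
  by exists setT, fst; split => // g; exists (g, 0%N).
have ex : exists i, ~ small [set g | R g i /\ g <> i].
  by apply: contrapT => hh; apply: allS => i; apply: contrapT => ns; apply: hh; exists i.
have [i0 [ns0 mi0]] := wo_min wo ex.
have [h hs] := nonsmall_surj ns0.
exists [set g | R g i0 /\ g <> i0], h; split.
  move=> i [Ri ne]; apply: contrapT => ns; apply: ne; exact: (wo_anti wo Ri (mi0 i ns)).
by move=> g; have [s [n [Ss e]]] := hs g; exists (s, n).
Qed.

Theorem mainTheorem7 :
  exists A : set (set nat), MAD A /\ ~ katetov_le (ideal_of A) conv.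
Proof.
have [R wo] := well_ordering_principle FF.
have [Ip [h [SM SJ]]] := index_exists wo.
have [G0 [VG mx]] := Zorn_bigcup (@Valid_chain R Ip h).
have full := maximal_full wo SM VG mx.
set A0 := Fam G0.
have [V1 V2 V2' VA0 V4] := VG.
have hand : forall f, handled f A0.
  move=> f; have [t [It <-]] := SJ f.
  have [a Ga] := full t It.
  exact: V4 _ _ Ga.
have chainP : forall F : set (set (set nat)), F `<=` [set A | ad_family (A0 `|` A)] ->
    total_on F subset -> ad_family (A0 `|` \bigcup_(X in F) X).
  move=> F FP tot.
  have common : forall a b, (A0 `|` \bigcup_(X in F) X) a -> (A0 `|` \bigcup_(X in F) X) b ->
      exists Q, ad_family Q /\ Q a /\ Q b.
    move=> a b [A0a|[X1 F1 X1a]] [A0b|[X2 F2 X2b]].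
    + by exists A0.
    + by exists (A0 `|` X2); split; [exact: FP|split; [left|right]].
    + by exists (A0 `|` X1); split; [exact: FP|split; [right|left]].
    + case: (tot _ _ F1 F2) => sub.
        by exists (A0 `|` X2); split; [exact: FP|split; right => //; apply: sub].
      by exists (A0 `|` X1); split; [exact: FP|split; right => //; apply: sub].
  split.
    by move=> a Fa; have [Q [[ad1 _] [Qa _]]] := common a a Fa Fa; apply: ad1.
  by move=> a b Fa Fb ne; have [Q [[_ ad2] [Qa Qb]]] := common a b Fa Fb; apply: ad2.
have [A1 [VA1 mx1]] := Zorn_bigcup chainP.
exists (A0 `|` A1); split.
  split => //; split.
    apply: (sub_infinite_set (A := P0)); last exact: P0_inf.
    by move=> b P0b; left; left.
  move=> A' sub adA'.
  have A1A' : A1 `<=` A' by move=> b A1b; apply: sub; right.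
  have nprop : ~ A1 `<` A'.
    by move=> pr; apply: (mx1 _ pr); rewrite /= (_ : A0 `|` A' = A') //; apply/seteqP; split => [b [A0b|//]|b A'b]; [apply: sub; left|right].
  have A'A1 : A' `<=` A1 by apply: contrapT => nsub; apply: nprop; split.
  apply/seteqP; split => [b A'b|]; [by right; apply: A'A1|exact: sub].
move=> [g Hg].
case: (hand g) => [[n nc]|[b [A0b nc]]]; apply: nc; apply: Hg.
  exists 0%N, (fun _ => set0); split; first by move=> i.
  apply: finite_setD; exact: finite_set1.
exists 1%N, (fun _ => b); split; first by move=> i _; left.
apply: (sub_finite_set (B := @set0 nat)) => // m [bm nb]; apply: nb; by exists 0%N.
Qed.
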